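(* Let $P,Q\in\mathbb P_d$ and let $R=\big[\gamma^{\mathrm{BW}}_{P^{-1}Q^{-1}}(t)\big]^{-1}$ for some $t\in[0,1]$. Then $\operatorname{F}_R(P,Q)=\operatorname{F}^{\mathrm U}(P,Q)$.
   Context: $\mathbb P_d$ is the set of $d\times d$ complex positive definite matrices; $A\#B:=A^{1/2}(A^{-1/2}BA^{-1/2})^{1/2}A^{1/2}$. The Bures–Wasserstein geodesic between $A,B\in\mathbb P_d$ is $\gamma^{\mathrm{BW}}_{AB}(t):=[(1-t)\mathbb I+t\,A^{-1}\#B]\,A\,[(1-t)\mathbb I+t\,A^{-1}\#B]$, $t\in[0,1]$. The generalized fidelity is $\operatorname{F}_R(P,Q):=\operatorname{Tr}\big[\sqrt{R^{1/2}PR^{1/2}}\,R^{-1}\sqrt{R^{1/2}QR^{1/2}}\big]$ and the Uhlmann fidelity is $\operatorname{F}^{\mathrm U}(P,Q):=\operatorname{Tr}\sqrt{P^{1/2}QP^{1/2}}$. *)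

(* Defs.v *)
(* Complex scalars: an arbitrary numClosedFieldType C
   (e.g. algC, or R[i] for a real closed / real field R); conjugation conjC. *)
From HB Require Import structures.
From mathcomp Require Import all_boot all_order all_algebra.
From Stdlib Require Import ClassicalEpsilon.
Set Implicit Arguments. Unset Strict Implicit. Unset Printing Implicit Defensive.
Import Order.TTheory GRing.Theory Num.Theory.
Local Open Scope ring_scope.

Section Defs.
Variable C : numClosedFieldType.

Definition adjmx m n (A : 'M[C]_(m, n)) : 'M[C]_(n, m) := map_mx Num.conj (A^T).

Definition psdmx d (A : 'M[C]_d) : Prop :=
  adjmx A = A /\ forall v : 'cV[C]_d, 0 <= (adjmx v *m A *m v) 0 0.

Definition posdefmx d (A : 'M[C]_d) : Prop :=
  adjmx A = A /\ forall v : 'cV[C]_d, v != 0 -> 0 < (adjmx v *m A *m v) 0 0.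

(* principal square root: the (unique) PSD S with S S = A, chosen by
   classical choice (for A PSD it exists and is unique). *)
Definition sqrtmx d (A : 'M[C]_d) : 'M[C]_d :=
  epsilon (inhabits 0) (fun S : 'M[C]_d => psdmx S /\ S *m S = A).

Definition gmeanmx d (A B : 'M[C]_d) : 'M[C]_d :=
  let sA := sqrtmx A in let isA := invmx sA in
  sA *m sqrtmx (isA *m B *m isA) *m sA.

Definition bw_geodesic d (A B : 'M[C]_d) (t : C) : 'M[C]_d :=
  let M := (1 - t) *: (1%:M : 'M[C]_d) + t *: gmeanmx (invmx A) B in
  M *m A *m M.

Definition gen_fidelity d (R P Q : 'M[C]_d) : C :=
  let sR := sqrtmx R in
  \tr (sqrtmx (sR *m P *m sR) *m invmx R *m sqrtmx (sR *m Q *m sR)).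

Definition uhlmann_fidelity d (P Q : 'M[C]_d) : C :=
  \tr (sqrtmx (sqrtmx P *m Q *m sqrtmx P)).

End Defs.

(* Main.v *)
Require Import Defs.
From HB Require Import structures.
From mathcomp Require Import all_boot all_order all_algebra.
From Stdlib Require Import ClassicalEpsilon.
Import Order.TTheory GRing.Theory Num.Theory.
Local Open Scope ring_scope.
Set Implicit Arguments. Unset Strict Implicit. Unset Printing Implicit Defensive.

Lemma adjmxM {C : numClosedFieldType} m n p (A : 'M[C]_(m,n)) (B : 'M[C]_(n,p)) :
  adjmx (A *m B) = adjmx B *m adjmx A.
Proof. by rewrite /adjmx trmx_mul map_mxM. Qed.

Lemma adjmxK {C : numClosedFieldType} m n (A : 'M[C]_(m,n)) : adjmx (adjmx A) = A.
Proof. by apply/matrixP=> i j; rewrite !mxE conjCK. Qed.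

Lemma adjmxD {C : numClosedFieldType} m n (A B : 'M[C]_(m,n)) : adjmx (A + B) = adjmx A + adjmx B.
Proof. by apply/matrixP=> i j; rewrite !mxE rmorphD. Qed.

Lemma adjmxN {C : numClosedFieldType} m n (A B : 'M[C]_(m,n)) : adjmx (A - B) = adjmx A - adjmx B.
Proof. by apply/matrixP=> i j; rewrite !mxE rmorphB. Qed.

Lemma adjmxZ {C : numClosedFieldType} m n (a : C) (A : 'M[C]_(m,n)) : adjmx (a *: A) = a^* *: adjmx A.
Proof. by apply/matrixP=> i j; rewrite !mxE rmorphM. Qed.

Lemma adjmx1 {C : numClosedFieldType} n : adjmx (1%:M : 'M[C]_n) = 1%:M.
Proof. by apply/matrixP=> i j; rewrite !mxE eq_sym; case: eqP => _; rewrite ?mulr1n ?mulr0n ?conjC1 ?conjC0. Qed.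

Lemma adjmx0 {C : numClosedFieldType} m n : adjmx (0 : 'M[C]_(m,n)) = 0.
Proof. by apply/matrixP=> i j; rewrite !mxE conjC0. Qed.

Lemma adjmxV {C : numClosedFieldType} n (A : 'M[C]_n) : adjmx (invmx A) = invmx (adjmx A).
Proof. by rewrite /adjmx trmx_inv map_invmx. Qed.

Lemma adj_unit {C : numClosedFieldType} n (A : 'M[C]_n) : (adjmx A \in unitmx) = (A \in unitmx).
Proof. by rewrite /adjmx map_unitmx unitmx_tr. Qed.

Lemma quad_diag {C : numClosedFieldType} n (y : 'rV[C]_n) (w : 'cV[C]_n) :
  (adjmx w *m diag_mx y *m w) 0 0 = \sum_j y 0 j * (`|w j 0| ^+ 2).
Proof.
rewrite mul_mx_diag !mxE; apply: eq_bigr => j _; rewrite !mxE normCK.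
by rewrite -mulrA mulrCA [w j 0 * _]mulrC.
Qed.

Lemma quad_id {C : numClosedFieldType} n (w : 'cV[C]_n) :
  (adjmx w *m w) 0 0 = \sum_j (`|w j 0| ^+ 2).
Proof.
rewrite -[adjmx w]mulmx1 -diag_const_mx quad_diag.
by apply: eq_bigr => j _; rewrite mxE mul1r.
Qed.

Lemma quad_id_ge0 {C : numClosedFieldType} n (w : 'cV[C]_n) : 0 <= (adjmx w *m w) 0 0.
Proof. by rewrite quad_id sumr_ge0 // => j _; rewrite exprn_ge0. Qed.

Lemma quad_id_eq0 {C : numClosedFieldType} n (w : 'cV[C]_n) : (adjmx w *m w) 0 0 = 0 -> w = 0.
Proof.
rewrite quad_id => /eqP; rewrite psumr_eq0 => [/allP H|j _]; last by rewrite exprn_ge0.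
apply/matrixP=> i j; rewrite ord1 mxE.
by have /(_ (mem_index_enum i)) := H i; rewrite /= sqrf_eq0 normr_eq0 => /eqP.
Qed.

Lemma quad_id_gt0 {C : numClosedFieldType} n (w : 'cV[C]_n) : w != 0 -> 0 < (adjmx w *m w) 0 0.
Proof.
move=> wn0; rewrite lt_def quad_id_ge0 andbT; apply/eqP => /quad_id_eq0 H.
by rewrite H eqxx in wn0.
Qed.

Lemma psd_cong {C : numClosedFieldType} n (A X : 'M[C]_n) :
  psdmx A -> psdmx (adjmx X *m A *m X).
Proof.
move=> [hA pA]; split; first by rewrite !adjmxM adjmxK hA mulmxA.
by move=> v; rewrite !mulmxA -adjmxM -!mulmxA mulmxA; apply: pA.
Qed.

Lemma pd_cong {C : numClosedFieldType} n (A X : 'M[C]_n) :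
  posdefmx A -> X \in unitmx -> posdefmx (adjmx X *m A *m X).
Proof.
move=> [hA pA] uX; split; first by rewrite !adjmxM adjmxK hA mulmxA.
move=> v vn0; rewrite !mulmxA -adjmxM -!mulmxA mulmxA; apply: pA.
apply: contra vn0 => /eqP Xv; by rewrite -(mulKmx uX v) Xv mulmx0.
Qed.

Lemma pd_psd {C : numClosedFieldType} n (A : 'M[C]_n) : posdefmx A -> psdmx A.
Proof.
move=> [hA pA]; split=> // v; case: (eqVneq v 0) => [->|vn0].
  by rewrite mulmx0 mxE.
exact: ltW (pA v vn0).
Qed.

Lemma pd_unit {C : numClosedFieldType} n (A : 'M[C]_n) : posdefmx A -> A \in unitmx.
Proof.
move=> [hA pA]; apply/negPn/negP => nu.
have : kermx A^T != 0 by rewrite kermx_eq0 row_free_unit unitmx_tr.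
case/rowV0Pn => u /sub_kermxP uA un0.
have vn0 : u^T != 0 by rewrite trmx_eq0.
have := pA _ vn0.
have AT : A *m u^T = 0 by rewrite -[A]trmxK -trmx_mul uA trmx0.
by rewrite -mulmxA AT mulmx0 mxE ltxx.
Qed.

Lemma pd_inv {C : numClosedFieldType} n (A : 'M[C]_n) : posdefmx A -> posdefmx (invmx A).
Proof.
move=> pdA; have uA := pd_unit pdA; have hA : adjmx A = A by case: pdA.
have -> : invmx A = adjmx (invmx A) *m A *m invmx A.
  by rewrite adjmxV hA mulVmx // mul1mx.
by apply: pd_cong => //; rewrite unitmx_inv.
Qed.

Lemma adjmx_diag {C : numClosedFieldType} n (y : 'rV[C]_n) :
  adjmx (diag_mx y) = diag_mx (map_mx Num.conj y).
Proof.
apply/matrixP=> i j; rewrite !mxE eq_sym; case: eqP => [->|_].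
  by rewrite !mulr1n.
by rewrite !mulr0n conjC0.
Qed.

Lemma unitary_adjK {C : numClosedFieldType} n (U : 'M[C]_n) :
  U \is unitarymx -> adjmx U *m U = 1%:M.
Proof.
move=> uU; have <- : invmx U = adjmx U by rewrite invmx_unitary.
by rewrite mulVmx // unitarymx_unit.
Qed.

Lemma unitary_Kadj {C : numClosedFieldType} n (U : 'M[C]_n) :
  U \is unitarymx -> U *m adjmx U = 1%:M.
Proof. by move/unitarymxP. Qed.

Lemma spectral_psd {C : numClosedFieldType} n (A : 'M[C]_n) :
  adjmx A = A ->
  exists2 U : 'M[C]_n, U \is unitarymx & A = adjmx U *m diag_mx (spectral_diag A) *m U.
Proof.
move=> hA; have nA : A \is normalmx.
  by apply/normalmxP; change (A *m adjmx A = adjmx A *m A); rewrite hA.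
have := orthomx_spectralP nA; rewrite invmx_unitary ?spectral_unitarymx // => E.
by exists (spectralmx A); rewrite ?spectral_unitarymx.
Qed.

Lemma quad_delta {C : numClosedFieldType} n (y : 'rV[C]_n) i :
  (adjmx (delta_mx i 0 : 'cV[C]_n) *m diag_mx y *m (delta_mx i 0 : 'cV[C]_n)) 0 0 = y 0 i.
Proof.
rewrite quad_diag (bigD1 i) //= big1 ?addr0.
  by rewrite mxE !eqxx /= normr1 expr1n mulr1.
by move=> j /negPf ji; rewrite mxE ji /= normr0 expr0n mulr0.
Qed.

Lemma psd_sqrt_ex {C : numClosedFieldType} n (A : 'M[C]_n) :
  psdmx A -> exists S, psdmx S /\ S *m S = A.
Proof.
move=> [hA pA]; have [U uU EA] := spectral_psd hA.
set x := spectral_diag A in EA.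
have x0 : forall i, 0 <= x 0 i.
  move=> i; have := pA (adjmx U *m delta_mx i 0).
  rewrite EA adjmxM adjmxK !mulmxA -[_ *m U *m adjmx U]mulmxA unitary_Kadj //.
  rewrite mulmx1 -[_ *m U *m adjmx U]mulmxA unitary_Kadj // mulmx1.
  by rewrite quad_delta.
pose y := \row_j sqrtC (x 0 j).
exists (adjmx U *m diag_mx y *m U); split; first split.
- rewrite !adjmxM adjmxK adjmx_diag mulmxA; congr (_ *m diag_mx _ *m _).
  by apply/matrixP=> i j; rewrite !mxE geC0_conj // sqrtC_ge0.
- move=> v; rewrite !mulmxA -adjmxM -!mulmxA mulmxA quad_diag.
  by apply: sumr_ge0 => j _; rewrite mxE mulr_ge0 ?sqrtC_ge0 ?exprn_ge0.
- rewrite !mulmxA -[_ *m U *m adjmx U]mulmxA unitary_Kadj // mulmx1.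
  rewrite -[_ *m diag_mx y *m diag_mx y]mulmxA mulmx_diag EA; congr (_ *m diag_mx _ *m _).
  by apply/matrixP=> i j; rewrite !mxE -expr2 sqrtCK ord1.
Qed.

Lemma psd_form0 {C : numClosedFieldType} n (S : 'M[C]_n) (v : 'cV[C]_n) :
  psdmx S -> (adjmx v *m S *m v) 0 0 = 0 -> S *m v = 0.
Proof.
move=> pS; have [B [[hB pB] EB]] := psd_sqrt_ex pS.
rewrite -EB -{1}hB !mulmxA -adjmxM -mulmxA => /quad_id_eq0 Bv.
by rewrite -mulmxA Bv mulmx0.
Qed.

Lemma diag_delta {C : numClosedFieldType} n (x : 'rV[C]_n) i :
  diag_mx x *m (delta_mx i 0 : 'cV[C]_n) = x 0 i *: delta_mx i 0.
Proof.
apply/matrixP=> k l; rewrite mul_diag_mx !mxE ord1 eqxx andbT.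
by case: eqP => [->|_]; rewrite ?mulr1 ?mulr0.
Qed.

Lemma psd_sqrt_uniq {C : numClosedFieldType} n (S T : 'M[C]_n) :
  psdmx S -> psdmx T -> S *m S = T *m T -> S = T.
Proof.
move=> pS pT EST; have [hS fS] := pS; have [hT fT] := pT.
pose D := S - T.
have hD : adjmx D = D by rewrite /D adjmxN hS hT.
have [U uU ED] := spectral_psd hD.
set x := spectral_diag D in ED.
suff x0 : forall i, x 0 i = 0.
  apply/eqP; rewrite -subr_eq0; apply/eqP; rewrite -/D ED.
  have -> : diag_mx x = 0.
    by apply/matrixP=> i j; rewrite !mxE x0 mul0rn.
  by rewrite mulmx0 mul0mx.
move=> i; pose e : 'cV[C]_n := delta_mx i 0; pose v := adjmx U *m e.
have en0 : e != 0.
  by apply/negP => /eqP/matrixP/(_ i 0); rewrite !mxE !eqxx /= => /eqP; rewrite oner_eq0.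
have vn0 : v != 0.
  apply: contra en0 => /eqP v0; apply/eqP.
  by rewrite -[e]mul1mx -(unitary_Kadj uU) -mulmxA -/v v0 mulmx0.
have Dv : D *m v = x 0 i *: v.
  rewrite ED /v -!mulmxA [U *m _]mulmxA unitary_Kadj // mul1mx.
  by rewrite diag_delta scalemxAr.
have vD : adjmx v *m D = (x 0 i)^* *: adjmx v.
  by rewrite -{1}hD -adjmxM Dv adjmxZ.
have w0 := quad_id_gt0 vn0.
have xr : (x 0 i)^* = x 0 i.
  have e1 : (adjmx v *m D *m v) 0 0 = (x 0 i)^* * (adjmx v *m v) 0 0.
    by rewrite vD -scalemxAl mxE.
  have e2 : (adjmx v *m D *m v) 0 0 = x 0 i * (adjmx v *m v) 0 0.
    by rewrite -mulmxA Dv -scalemxAr mxE.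
  by apply: (mulIf (lt0r_neq0 w0)); rewrite -e1 -e2.
have key : x 0 i * ((adjmx v *m S *m v) 0 0 + (adjmx v *m T *m v) 0 0) = 0.
  have E0 : S *m D + D *m T = 0.
    by rewrite /D mulmxBr mulmxBl addrA subrK EST subrr.
  have : (adjmx v *m (S *m D + D *m T) *m v) 0 0 = 0 by rewrite E0 mulmx0 mul0mx mxE.
  have t1 : (adjmx v *m (S *m D) *m v) 0 0 = x 0 i * (adjmx v *m S *m v) 0 0.
    by rewrite mulmxA -(mulmxA _ D v) Dv -scalemxAr mxE.
  have t2 : (adjmx v *m (D *m T) *m v) 0 0 = x 0 i * (adjmx v *m T *m v) 0 0.
    by rewrite mulmxA vD -!scalemxAl mxE xr.
  by rewrite mulmxDr mulmxDl mxE t1 t2 mulrDr.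
apply/eqP; apply: contraT => xn0.
move/eqP: key; rewrite mulf_eq0 (negPf xn0) /= paddr_eq0 ?fS ?fT // => /andP[/eqP a0 /eqP b0].
have := psd_form0 pS a0; have := psd_form0 pT b0 => Tv Sv.
have : D *m v = 0 by rewrite /D mulmxBl Sv Tv subrr.
by rewrite Dv => /eqP; rewrite scaler_eq0 (negPf xn0) (negPf vn0).
Qed.

Lemma sqrtmx_spec {C : numClosedFieldType} n (A : 'M[C]_n) :
  psdmx A -> psdmx (sqrtmx A) /\ sqrtmx A *m sqrtmx A = A.
Proof.
move=> pA; rewrite /sqrtmx.
apply: (epsilon_spec (inhabits 0) (fun S : 'M[C]_n => psdmx S /\ S *m S = A)).
by have [S HS] := psd_sqrt_ex pA; exists S.
Qed.

Lemma sqrtmx_eq {C : numClosedFieldType} n (A S : 'M[C]_n) :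
  psdmx S -> S *m S = A -> sqrtmx A = S.
Proof.
move=> pS EA.
have pA : psdmx A.
  rewrite -EA; case: (pS) => hS _; rewrite -{1}hS -[adjmx S]mulmx1; apply: psd_cong.
  by split=> [|v]; rewrite ?adjmx1 // mulmx1 quad_id_ge0.
have [p1 p2] := sqrtmx_spec pA.
by apply: psd_sqrt_uniq => //; rewrite p2.
Qed.

Lemma psd_unit_pd {C : numClosedFieldType} n (W : 'M[C]_n) :
  psdmx W -> W \in unitmx -> posdefmx W.
Proof.
move=> pW uW; have [hW fW] := pW; split=> // v vn0.
rewrite lt_def fW andbT; apply: contra vn0 => /eqP /(psd_form0 pW) Wv.
by rewrite -(mulKmx uW v) Wv mulmx0.
Qed.

Lemma entry_comb {C : numClosedFieldType} m n (X Y : 'M[C]_(m,n)) a b i j :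
  (a *: X + b *: Y) i j = a * X i j + b * Y i j.
Proof. by rewrite !mxE. Qed.

Lemma pd_comb {C : numClosedFieldType} n (A : 'M[C]_n) (a b : C) :
  posdefmx A -> 0 <= a -> 0 <= b -> (0 < a) || (0 < b) ->
  posdefmx (a *: 1%:M + b *: A).
Proof.
move=> [hA fA] a0 b0 ab; split.
  by rewrite adjmxD !adjmxZ adjmx1 hA !geC0_conj.
move=> v vn0; rewrite mulmxDr mulmxDl -!scalemxAr -!scalemxAl mulmx1 entry_comb.
have q0 := quad_id_gt0 vn0; have q1 := fA v vn0.
case/orP: ab => [a0'|b0'].
  by apply: ltr_wpDr; [apply: mulr_ge0 => //; exact: ltW | exact: mulr_gt0].
by apply: ltr_wpDl; [apply: mulr_ge0 => //; exact: ltW | exact: mulr_gt0].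
Qed.


Lemma pd_herm {C : numClosedFieldType} n (A : 'M[C]_n) : posdefmx A -> adjmx A = A.
Proof. by case. Qed.

Lemma invmxM {C : numClosedFieldType} n (A B : 'M[C]_n) :
  A \in unitmx -> B \in unitmx -> invmx (A *m B) = invmx B *m invmx A.
Proof.
move=> uA uB; have uAB : A *m B \in unitmx by rewrite unitmx_mul uA.
have E : A *m B *m (invmx B *m invmx A) = 1%:M.
  by rewrite mulmxA mulmxK // mulmxV.
by rewrite -[LHS]mulmx1 -E mulmxA mulVmx // mul1mx.
Qed.

Theorem mainTheorem5 (C : numClosedFieldType) (d : nat) (P Q : 'M[C]_d) (t : C) :
  posdefmx P -> posdefmx Q -> 0 <= t <= 1 ->
  gen_fidelity (invmx (bw_geodesic (invmx P) (invmx Q) t)) P Q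
  = uhlmann_fidelity P Q.
Proof.
move=> pdP pdQ /andP[t0 t1].
have uP := pd_unit pdP; have uQ := pd_unit pdQ.
have [psP EP] := sqrtmx_spec (pd_psd pdP).
set sP := sqrtmx P in psP EP.
have hsP : adjmx sP = sP by case: psP.
have usP : sP \in unitmx by move: uP; rewrite -EP unitmx_mul => /andP[].
have pdPQ : posdefmx (sP *m Q *m sP) by rewrite -{1}hsP; apply: pd_cong.
have [psW EW] := sqrtmx_spec (pd_psd pdPQ).
rewrite /uhlmann_fidelity -/sP.
set W := sqrtmx (sP *m Q *m sP) in psW EW *.
have uW : W \in unitmx by move: (pd_unit pdPQ); rewrite -EW unitmx_mul => /andP[].
have pdW := psd_unit_pd psW uW.
have pdiW := pd_inv pdW.
have iWW : invmx W *m invmx W = invmx sP *m invmx Q *m invmx sP.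
  rewrite -(invmxM uW uW) EW invmxM ?unitmx_mul ?usP ?uQ // invmxM //.
  by rewrite mulmxA.
have EK : sqrtmx (invmx sP *m invmx Q *m invmx sP) = invmx W.
  by apply: sqrtmx_eq; [exact: pd_psd | exact: iWW].
pose G := sP *m invmx W *m sP.
have EG : gmeanmx (invmx (invmx P)) (invmx Q) = G.
  by rewrite /gmeanmx invmxK -/sP EK.
have pdG : posdefmx G by rewrite /G -{1}hsP; apply: pd_cong.
have GPG : G *m invmx P *m G = invmx Q.
  rewrite /G -EP invmxM // !mulmxA mulmxK // mulmxKV // -(mulmxA sP) iWW.
  by rewrite !mulmxA mulmxV // mul1mx mulmxKV.
have EGd : G = sP *m invmx W *m sP by [].
clearbody G.
have uG := pd_unit pdG.
rewrite /bw_geodesic EG.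
set M := (1 - t) *: 1%:M + t *: G.
pose L := (1 - t) *: invmx G + t *: 1%:M.
have EM1 : M = G *m L.
  by rewrite /L mulmxDr -!scalemxAr mulmxV // mulmx1.
have EM2 : M = L *m G.
  by rewrite /L mulmxDl -!scalemxAl mulVmx // mul1mx.
have ELd : L = (1 - t) *: invmx G + t *: 1%:M by [].
have tpos : (0 < 1 - t) || (0 < t).
  case: (eqVneq t 0) => [->|tn0]; first by rewrite subr0 ltr01.
  by rewrite orbC lt_def tn0 t0.
have t1' : 0 <= 1 - t by rewrite subr_ge0.
have pdM : posdefmx M by apply: pd_comb.
have pdL : posdefmx L.
  by rewrite ELd addrC; apply: pd_comb => //; [exact: pd_inv | rewrite orbC].
clearbody L M.
have uM := pd_unit pdM; have uL := pd_unit pdL.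
have hM := pd_herm pdM; have hL := pd_herm pdL.
have gL : M *m invmx P *m M = L *m invmx Q *m L.
  have H : L *m G *m invmx P *m G = L *m invmx Q by rewrite -GPG !mulmxA.
  by rewrite {1}EM2 EM1 !mulmxA H.
have pdg : posdefmx (M *m invmx P *m M).
  by rewrite -{1}hM; apply: pd_cong => //; apply: pd_inv.
set R := invmx (M *m invmx P *m M).
have ERd : R = invmx (M *m invmx P *m M) by [].
clearbody R.
have ER1 : R = invmx M *m P *m invmx M.
  by rewrite ERd !invmxM ?unitmx_mul ?unitmx_inv ?uM ?uP // invmxK mulmxA.
have ER2 : R = invmx L *m Q *m invmx L.
  by rewrite ERd gL !invmxM ?unitmx_mul ?unitmx_inv ?uL ?uQ // invmxK mulmxA.
have pdR : posdefmx R by rewrite ERd; apply: pd_inv.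
have [psR ER] := sqrtmx_spec (pd_psd pdR).
rewrite /gen_fidelity /=.
set sR := sqrtmx R in psR ER *.
have hsR : adjmx sR = sR by case: psR.
have usR : sR \in unitmx by move: (pd_unit pdR); rewrite -ER unitmx_mul => /andP[].
clearbody sR.
have S1 : sqrtmx (sR *m P *m sR) = sR *m M *m sR.
  apply: sqrtmx_eq; first by rewrite -{1}hsR; apply: psd_cong; apply: pd_psd.
  rewrite !mulmxA -(mulmxA _ sR sR) ER ER1 !mulmxA mulmxKV // -!mulmxA mulKVmx //.
have S2 : sqrtmx (sR *m Q *m sR) = sR *m L *m sR.
  apply: sqrtmx_eq; first by rewrite -{1}hsR; apply: psd_cong; apply: pd_psd.
  rewrite !mulmxA -(mulmxA _ sR sR) ER ER2 !mulmxA mulmxKV // -!mulmxA mulKVmx //.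
rewrite S1 S2 -ER invmxM // !mulmxA mulmxK // mulmxKV //.
rewrite mxtrace_mulC !mulmxA ER ER2 EM2 !mulmxA mulmxKV //.
rewrite mxtrace_mulC !mulmxA mulmxV // mul1mx mxtrace_mulC.
have EW' : invmx W *m sP *m Q *m sP = W.
  by rewrite -!mulmxA (mulmxA sP Q sP) -EW mulKmx.
by rewrite EGd -!mulmxA mxtrace_mulC !mulmxA EW'.
Qed.
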